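(* Let $E\subset\mathbb{R}^2$ be a polygon with vertices $\mathbf{q}_1,\ldots,\mathbf{q}_n$, let $\gamma>0$ be a constant and $a^E(u,v)=\gamma\int_E\nabla u\cdot\nabla v\,\mathrm{d}\mathbf{x}$. Let $\mathcal{W}(E)$ be the space of functions $u:E\to\mathbb{R}$ that are affine on each edge of $E$ and satisfy $\Delta u=0$ in $E$. Let $\mathcal{W}_R(E)$ be the space of constant functions on $E$, $\mathcal{W}_C(E)=\{u \text{ affine on } E:\ \bar u=0\}$, and define, for $v\in\mathcal{W}(E)$, $\pi_Rv:=\bar v$ (a constant function), $\pi_Cv(\mathbf{x}):=\langle\nabla v\rangle\cdot(\mathbf{x}-\overline{\mathbf{q}})$ and $\pi_{\mathcal P}v:=\pi_Cv+\pi_Rv$. Then: (i) for all $r\in\mathcal{W}_R(E)$, $c\in\mathcal{W}_C(E)$ and $v\in\mathcal{W}(E)$, $a^E(r,v)=0$ and $a^E(c,v-\pi_Cv)=0$; (ii) for all $u,v\in\mathcal{W}(E)$, $a^E(u,v)=a^E(\pi_Cu,\pi_Cv)+a^E(u-\pi_{\mathcal P}u,\,v-\pi_{\mathcal P}v)$.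
   Context: For a continuous function $v$ on $E$, $\bar v=\frac1n\sum_{j=1}^n v(\mathbf{q}_j)$ is the average of its values at the vertices; $\overline{\mathbf{q}}=\frac1n\sum_j\mathbf{q}_j$; for an integrable (possibly vector-valued) function $w$, $\langle w\rangle=\frac{1}{|E|}\int_Ew\,\mathrm{d}\mathbf{x}$. *)

(* Defs.v *)
From HB Require Import structures.
From mathcomp Require Import all_boot all_order all_algebra.
From mathcomp Require Import all_classical all_reals all_analysis.
Set Implicit Arguments. Unset Strict Implicit. Unset Printing Implicit Defensive.
Import Order.TTheory GRing.Theory Num.Theory.
Import numFieldNormedType.Exports.
Local Open Scope classical_set_scope.
Local Open Scope ring_scope.

Section Defs.
Variable R : realType.

Definition leb2 := ((@lebesgue_measure R) \x (@lebesgue_measure R))%E.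

Definition segment (a b : R * R) : set (R * R) :=
  [set (1 - t) *: a + t *: b | t in `[0, 1]%classic].

Definition edge (n : nat) (q : nat -> R * R) (i : nat) : set (R * R) :=
  segment (q i) (q ((i.+1 %% n)%N)).

(* E is the closed region bounded by the simple closed polygon q_0 ... q_(n-1) *)
Definition is_polygon (E : set (R * R)) (n : nat) (q : nat -> R * R) : Prop :=
  [/\ (3 <= n)%N,
      ({in [set i | (i < n)%N] &, injective q} /\
      (forall i j, (i < n)%N -> (j < n)%N -> i <> j ->
         edge n q i `&` edge n q j `<=`
         [set q i; q ((i.+1 %% n)%N)] `&` [set q j; q ((j.+1 %% n)%N)])),
      compact E,
      E = closure (interior E) &
      E `\` interior E = \bigcup_(i in [set i | (i < n)%N]) edge n q i].

Definition dx (u : R * R -> R) : R * R -> R := fun x => 'D_((1, 0) : R * R) u x.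
Definition dy (u : R * R -> R) : R * R -> R := fun x => 'D_((0, 1) : R * R) u x.
Definition grad_dot (u v : R * R -> R) : R * R -> R :=
  fun x => dx u x * dx v x + dy u x * dy v x.

(* |E| and the average <w> = (1/|E|) int_E w (integrals over the interior;
   the boundary of a polygon is Lebesgue-null) *)
Definition area (E : set (R * R)) : R := fine (leb2 (interior E)).
Definition mean (E : set (R * R)) (w : R * R -> R) : R :=
  (area E)^-1 * Rintegral leb2 (interior E) w.

Definition aE (gamma : R) (E : set (R * R)) (u v : R * R -> R) : R :=
  gamma * Rintegral leb2 (interior E) (grad_dot u v).

Definition vavg (n : nat) (q : nat -> R * R) (v : R * R -> R) : R :=
  n%:R^-1 * \sum_(j < n) v (q j).
Definition qbar (n : nat) (q : nat -> R * R) : R * R :=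
  n%:R^-1 *: \sum_(j < n) q j.

Definition affine_fun (g : R * R) (c : R) : R * R -> R :=
  fun x => g.1 * x.1 + g.2 * x.2 + c.

Definition WE (E : set (R * R)) (n : nat) (q : nat -> R * R) (u : R * R -> R)
  : Prop :=
  [/\ {within E, continuous u},
      (forall i, (i < n)%N -> exists g c,
         forall x, edge n q i x -> u x = affine_fun g c x),
      (forall x, interior E x ->
         [/\ differentiable u x, differentiable (dx u) x,
             differentiable (dy u) x & dx (dx u) x + dy (dy u) x = 0]),
      leb2.-integrable (interior E) (fun x => ((dx u x) ^+ 2)%:E) &
      leb2.-integrable (interior E) (fun x => ((dy u x) ^+ 2)%:E)].

Definition WR (u : R * R -> R) : Prop := exists c, u = fun _ => c.
Definition WC (n : nat) (q : nat -> R * R) (u : R * R -> R) : Prop :=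
  (exists g c, u = affine_fun g c) /\ vavg n q u = 0.

Definition proj_R (n : nat) (q : nat -> R * R) (v : R * R -> R) : R * R -> R :=
  fun _ => vavg n q v.
Definition proj_C (E : set (R * R)) (n : nat) (q : nat -> R * R) (v : R * R -> R)
  : R * R -> R :=
  fun x => mean E (dx v) * (x.1 - (qbar n q).1) + mean E (dy v) * (x.2 - (qbar n q).2).
Definition proj_P (E : set (R * R)) (n : nat) (q : nat -> R * R) (v : R * R -> R)
  : R * R -> R :=
  fun x => proj_C E n q v x + proj_R n q v x.

End Defs.

(* Main.v *)
Require Import Defs.
From HB Require Import structures.
From mathcomp Require Import all_boot all_order all_algebra.
From mathcomp Require Import all_classical all_reals all_analysis.
From mathcomp Require Import measurable_realfun.
From mathcomp Require Import lra ring.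
Import Order.TTheory GRing.Theory Num.Theory.
Import numFieldNormedType.Exports.
Local Open Scope classical_set_scope.
Local Open Scope ring_scope.
Section S.
Variable R : realType.
Definition T2 := (measurableTypeR R * measurableTypeR R)%type.

Lemma open_meas2 (A : set (R * R)) : open A -> measurable (A : set T2).
Proof.
move=> oA.
pose F := fun t : rat * rat * rat =>
  if `[< ball (ratr t.1.1 : R) (ratr t.2) `*` ball (ratr t.1.2 : R) (ratr t.2) `<=` A >]
  then ball (ratr t.1.1 : R) (ratr t.2) `*` ball (ratr t.1.2 : R) (ratr t.2) else set0.
have -> : A = \bigcup_t F t.
  apply/seteqP; split; last first.
    move=> x [t _]; rewrite /F; case: ifPn => [/asboolP|]; last by [].
    exact.
  move=> x Ax.
  have : nbhs x A by apply: open_nbhs_nbhs; split.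
  case/nbhs_ballP => e e0 exA.
  have e4 : 0 < e / 4 by rewrite divr_gt0.
  have [a1 ha1] : exists q : rat, ratr q \in `]x.1 - e/4, x.1 + e/4[.
    by apply: rat_in_itvoo; rewrite ltrBlDr -addrA ltrDl addr_gt0.
  have [a2 ha2] : exists q : rat, ratr q \in `]x.2 - e/4, x.2 + e/4[.
    by apply: rat_in_itvoo; rewrite ltrBlDr -addrA ltrDl addr_gt0.
  have [c hc] : exists q : rat, ratr q \in `]e/4, e/2[.
    apply: rat_in_itvoo; rewrite ltr_pM2l // ltf_pV2 ?posrE //; lra.
  move: ha1 ha2 hc; rewrite !in_itv /= => /andP[h1 h1'] /andP[h2 h2'] /andP[h3 h3'].
  have sub : ball (ratr a1 : R) (ratr c) `*` ball (ratr a2 : R) (ratr c) `<=` A.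
    move=> y [/= y1 y2]; apply: exA; split => /=;
    move: y1 y2; rewrite -!ball_normE /ball_ /= => y1 y2.
      rewrite (le_lt_trans (ler_distD (ratr a1) _ _)) //.

      have : `|x.1 - ratr a1| < e / 4 by rewrite ltr_norml; apply/andP; split; lra.
      lra.
    rewrite (le_lt_trans (ler_distD (ratr a2) _ _)) //.
    have : `|x.2 - ratr a2| < e / 4 by rewrite ltr_norml; apply/andP; split; lra.
    lra.
  exists (a1, a2, c) => //; rewrite /F /=.
  case: ifPn => [_|/asboolP]; last by [].
  rewrite -!ball_normE /ball_ /=; split => /=; rewrite ltr_norml; apply/andP; split; lra.
apply: (@countable_bigcupT_measurable _ T2 _ F) => //.
move=> t; rewrite /F; case: ifPn => _ //.
by apply: measurableX; apply: open_measurable; exact: ball_open.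
Qed.
Lemma cont_meas2 (D : set (R * R)) (f : R * R -> R) : open D ->
  (forall x, D x -> {for x, continuous f}) -> measurable_fun (D : set T2) (f : T2 -> R).
Proof.
move=> oD cf; apply: (@measurability _ _ _ _ _ _ (@RGenOpens.G R)).
  exact: (RGenOpens.measurableE R).
move=> _ [_ [a [b ->] <-]].
apply: open_meas2; rewrite openE => x [Dx Ux].
rewrite /interior; apply: filterI.
  by apply: open_nbhs_nbhs; split.
apply: (cf x Dx); apply: open_nbhs_nbhs; split => //; exact: interval_open.
Qed.
Lemma fin_compact (E : set (R * R)) : compact E -> (leb2 (interior E) < +oo)%E.
Proof.
move=> /compact_bounded [M [Mreal HM]].
have /HM EM : M + 1 > M by rewrite ltrDl.
have mI : measurable (interior E : set T2) by apply: open_meas2; exact: open_interior.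
have mB : measurable (`[- (M+1), M+1]%classic `*` `[- (M+1), M+1]%classic : set T2).
  by apply: measurableX.
rewrite (@le_lt_trans _ _ (leb2 (`[- (M+1), M+1]%classic `*` `[- (M+1), M+1]%classic : set T2))) //.
  apply: le_measure; rewrite ?inE //.
  move=> x /interior_subset /EM /=; rewrite (@prod_normE _ R R (x : R * R)) ge_max => /andP[h1 h2].
  by split; rewrite /= in_itv /= -ler_norml.
rewrite /leb2 product_measure1E //= !lebesgue_measure_itv /=.
by case: ifP => _; rewrite -?EFinM ?ltry // mul0e ltry.
Qed.
Lemma affine_cvg (g : R * R) (c : R) (x v : R * R) :
  (fun h : R => h^-1 *: ((affine_fun g c \o shift x) (h *: v) - affine_fun g c x))
    @ (0:R)^' --> g.1 * v.1 + g.2 * v.2.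
Proof.
apply: (@cvg_trans _ ((fun _ => g.1 * v.1 + g.2 * v.2) @ (0:R)^')); last exact: cvg_cst.
apply: near_eq_cvg; near=> h.
have h0 : h != 0 by near: h; exact: nbhs_dnbhs_neq.
rewrite /affine_fun /= /shift /=.
rewrite -[h *: v.1]/(h * v.1) -[h *: v.2]/(h * v.2).
set k := (X in h^-1 *: X). rewrite -[h^-1 *: k]/(h^-1 * k) /k.
field.
Unshelve. all: by end_near.
Qed.

Lemma derive_affine (g : R * R) (c : R) (x v : R * R) :
  'D_v (affine_fun g c) x = g.1 * v.1 + g.2 * v.2.
Proof. exact: cvg_lim (affine_cvg g c x v). Qed.

Lemma derivable_affine (g : R * R) (c : R) (x v : R * R) :
  derivable (affine_fun g c) x v.
Proof. exact: cvgP (affine_cvg g c x v). Qed.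

Lemma derive_sub_affine (u : R * R -> R) (g : R * R) (c : R) (x v : R * R) :
  differentiable u x ->
  'D_v (fun y => u y - affine_fun g c y) x = 'D_v u x - (g.1 * v.1 + g.2 * v.2).
Proof.
move=> du.
have -> : (fun y => u y - affine_fun g c y) = u - affine_fun g c by [].
rewrite deriveB ?derive_affine //; last exact: derivable_affine.
exact: diff_derivable.
Qed.
Section Int.
Variable E : set (R * R).
Local Notation D := (interior E).
Hypothesis mD : measurable (D : set T2).
Hypothesis finD : (leb2 D < +oo)%E.
Local Notation Int f := ((@leb2 R).-integrable D (EFin \o f)).
Local Notation I f := (Rintegral (@leb2 R) D f).

Lemma IntC (k : R) : Int (fun _ => k).
Proof.
apply/integrableP; split; first exact/measurable_EFinP/measurable_cst.
have fD : leb2 D \is a fin_num by rewrite ge0_fin_numE // measure_ge0.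
rewrite (eq_integral (fun _ => (`|k|)%:E)); last by move=> x _; rewrite /=.
by rewrite integral_cst //; apply: lte_mul_pinfty => //; exact: finD.
Qed.

Lemma IntD {f g} : Int f -> Int g -> Int (fun x => f x + g x).
Proof.
move=> hf hg; apply: (eq_integrable mD _ _ _ (integrableD mD hf hg)) => x _ /=.
by rewrite EFinD.
Qed.

Lemma IntZ k {f} : Int f -> Int (fun x => k * f x).
Proof.
move=> hf; apply: (eq_integrable mD _ _ _ (integrableZl mD k hf)) => x _ /=.
by rewrite EFinM.
Qed.

Lemma Int_prod {a b : R * R -> R} :
  measurable_fun (D : set T2) a -> measurable_fun (D : set T2) b ->
  (@leb2 R).-integrable D (fun x => ((a x) ^+ 2)%:E) ->
  (@leb2 R).-integrable D (fun x => ((b x) ^+ 2)%:E) ->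
  Int (fun x => a x * b x).
Proof.
move=> ma mb ia ib.
have iab := integrableD mD ia ib.
apply: (le_integrable mD _ _ iab).
  by apply/measurable_EFinP; exact: measurable_funM.
move=> x _ /=; rewrite lee_fin [X in _ <= X]ger0_norm; last first.
  by apply: addr_ge0; exact: sqr_ge0.
rewrite normrM -(real_normK (num_real (a x))) -(real_normK (num_real (b x))).
have := normr_ge0 (a x); have := normr_ge0 (b x).
set p := `|a x|; set r := `|b x|.
nra.
Qed.

Lemma I_D {f g} : Int f -> Int g -> I (fun x => f x + g x) = I f + I g.
Proof. by move=> hf hg; rewrite RintegralD. Qed.

Lemma I_Z k {f} : Int f -> I (fun x => k * f x) = k * I f.
Proof. by move=> hf; rewrite RintegralZl. Qed.

Lemma I_C k : I (fun _ => k) = k * fine (leb2 D).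
Proof. exact: Rintegral_cst. Qed.

Lemma I_mean f : Int f ->
  I f = fine (leb2 D) * ((fine (leb2 D))^-1 * I f).
Proof.
move=> hf; have [h0|h0] := eqVneq (fine (leb2 D)) 0; last first.
  by rewrite mulrA divff // mul1r.
rewrite h0 mul0r.
have m0 : leb2 D = 0%E.
  have fD : leb2 D \is a fin_num by rewrite ge0_fin_numE // measure_ge0.
  by rewrite -(fineK fD) h0.
rewrite /Rintegral null_set_integral //.
by case/integrableP: hf.
Qed.

Lemma Int_sq (a : R * R -> R) :
  measurable_fun (D : set T2) a ->
  (@leb2 R).-integrable D (fun x => ((a x) ^+ 2)%:E) -> Int a.
Proof.
move=> ma ia.
have h1 : (@leb2 R).-integrable D (fun x => (((fun _ : R * R => 1 : R) x) ^+ 2)%:E).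
  apply: (eq_integrable mD _ _ _ (IntC 1)) => x _ /=; by rewrite expr1n.
have := Int_prod ma (measurable_cst _) ia h1.
by apply: eq_integrable => // x _ /=; rewrite mulr1.
Qed.

Lemma I_lin f0 f1 f2 f3 f4 k1 k2 k3 k4 K :
  Int f0 -> Int f1 -> Int f2 -> Int f3 -> Int f4 ->
  I (fun x => f0 x + k1 * f1 x + k2 * f2 x + k3 * f3 x + k4 * f4 x + K) =
  I f0 + k1 * I f1 + k2 * I f2 + k3 * I f3 + k4 * I f4 + K * fine (leb2 D).
Proof.
move=> h0 h1 h2 h3 h4.
have i1 := IntD h0 (IntZ k1 h1).
have i2 := IntD i1 (IntZ k2 h2).
have i3 := IntD i2 (IntZ k3 h3).
have i4 := IntD i3 (IntZ k4 h4).
rewrite (I_D i4 (IntC K)) I_C (I_D i3 (IntZ k4 h4)) (I_D i2 (IntZ k3 h3)).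
rewrite (I_D i1 (IntZ k2 h2)) (I_D h0 (IntZ k1 h1)).
by rewrite !I_Z.
Qed.

Lemma WE_meas {n q u} : WE E n q u ->
  measurable_fun (D : set T2) (dx u) /\ measurable_fun (D : set T2) (dy u).
Proof.
case=> _ _ H _ _; split; apply: cont_meas2; try exact: open_interior;
  move=> x /H [_ h1 h2 _]; exact: differentiable_continuous.
Qed.

Lemma WE_int {n q u} : WE E n q u -> Int (dx u) /\ Int (dy u).
Proof.
move=> hu; have [m1 m2] := WE_meas hu; case: hu => _ _ _ i1 i2.
by split; apply: Int_sq.
Qed.

Lemma WE_prod n q u v : WE E n q u -> WE E n q v ->
  Int (fun x => dx u x * dx v x + dy u x * dy v x).
Proof.
move=> hu hv; have [m1 m2] := WE_meas hu; have [m3 m4] := WE_meas hv.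
case: hu => _ _ _ i1 i2; case: hv => _ _ _ i3 i4.
by apply: IntD; apply: Int_prod.
Qed.

Lemma part1_alg f1 f2 k1 k2 : Int f1 -> Int f2 ->
  I (fun x => k1 * (f1 x - (fine (leb2 D))^-1 * I f1) +
              k2 * (f2 x - (fine (leb2 D))^-1 * I f2)) = 0.
Proof.
move=> h1 h2.
rewrite (eq_Rintegral (@leb2 R) (g := fun x => (fun _ => 0) x + k1 * f1 x + k2 * f2 x
   + 0 * (fun _ => 0) x + 0 * (fun _ => 0) x
   + (- (k1 * ((fine (leb2 D))^-1 * I f1) + k2 * ((fine (leb2 D))^-1 * I f2))))); last first.
  move=> x _ /=.
  move: (f1 x) (f2 x) ((fine (leb2 D))^-1 * I f1) ((fine (leb2 D))^-1 * I f2) => p1 p2 p3 p4.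
  ring.
rewrite I_lin //; try exact: IntC.
rewrite !I_C.
move: (I_mean _ h1) (I_mean _ h2).
move: (I f1) (I f2) (fine (leb2 D)) => X Y a.
move: (a^-1 * X) (a^-1 * Y) => xm ym -> ->.
ring.
Qed.

Lemma part2_alg a b c d : Int a -> Int b -> Int c -> Int d ->
  Int (fun x => a x * c x + b x * d x) ->
  I (fun x => a x * c x + b x * d x) =
  I (fun _ => (fine (leb2 D))^-1 * I a * ((fine (leb2 D))^-1 * I c) +
              (fine (leb2 D))^-1 * I b * ((fine (leb2 D))^-1 * I d)) +
  I (fun x => (a x - (fine (leb2 D))^-1 * I a) * (c x - (fine (leb2 D))^-1 * I c) +
              (b x - (fine (leb2 D))^-1 * I b) * (d x - (fine (leb2 D))^-1 * I d)).
Proof.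
move=> ha hb hc hd hp.
move: (I_mean _ ha) (I_mean _ hb) (I_mean _ hc) (I_mean _ hd).
set ma := (fine (leb2 D))^-1 * I a.
set mb := (fine (leb2 D))^-1 * I b.
set mc := (fine (leb2 D))^-1 * I c.
set md := (fine (leb2 D))^-1 * I d.
move=> ea eb ec ed; clearbody ma mb mc md.
rewrite (eq_Rintegral (@leb2 R) (g := fun x => (fun x => a x * c x + b x * d x) x
   + (- mc) * a x + (- ma) * c x + (- md) * b x + (- mb) * d x
   + (ma * mc + mb * md))
   (f := fun x => (a x - ma) * (c x - mc) + (b x - mb) * (d x - md))); last first.
  move=> x _ /=.
  clear ea eb ec ed; move: (a x) (b x) (c x) (d x) ma mb mc md => a' b' c' d' p1 p2 p3 p4.
  ring.
rewrite I_lin // I_C.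
rewrite ea eb ec ed.
clear ea eb ec ed; move: (I (fun x => a x * c x + b x * d x)) (fine (leb2 D)) ma mb mc md => P z p1 p2 p3 p4.
ring.
Qed.

End Int.

Lemma projC_affine E n q (v : R * R -> R) :
  proj_C E n q v = affine_fun (mean E (dx v), mean E (dy v))
    (- (mean E (dx v) * (qbar n q).1 + mean E (dy v) * (qbar n q).2)).
Proof.
apply/funext => x; rewrite /proj_C /affine_fun.
move: (mean E (dx v)) (mean E (dy v)) (qbar n q) => a b Q /=; ring.
Qed.

Lemma projP_affine E n q (v : R * R -> R) :
  proj_P E n q v = affine_fun (mean E (dx v), mean E (dy v))
    (- (mean E (dx v) * (qbar n q).1 + mean E (dy v) * (qbar n q).2) + vavg n q v).
Proof.
apply/funext => x; rewrite /proj_P /proj_C /proj_R /affine_fun.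
move: (mean E (dx v)) (mean E (dy v)) (qbar n q) (vavg n q v) => a b Q w /=; ring.
Qed.

Lemma dx_affine (g : R * R) (c : R) (x : R * R) : dx (affine_fun g c) x = g.1.
Proof. by rewrite /dx derive_affine /= mulr1 mulr0 addr0. Qed.
Lemma dy_affine (g : R * R) (c : R) (x : R * R) : dy (affine_fun g c) x = g.2.
Proof. by rewrite /dy derive_affine /= mulr1 mulr0 add0r. Qed.
Lemma dx_sub (u : R * R -> R) (g : R * R) (c : R) (x : R * R) : differentiable u x ->
  dx (fun y => u y - affine_fun g c y) x = dx u x - g.1.
Proof. by move=> du; rewrite /dx derive_sub_affine //= mulr1 mulr0 addr0. Qed.
Lemma dy_sub (u : R * R -> R) (g : R * R) (c : R) (x : R * R) : differentiable u x ->
  dy (fun y => u y - affine_fun g c y) x = dy u x - g.2.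
Proof. by move=> du; rewrite /dy derive_sub_affine //= mulr1 mulr0 add0r. Qed.

End S.
Arguments open_meas2 {R A}.
Arguments fin_compact {R E}.
Arguments I_mean {R E}.
Arguments IntC {R E}.
Arguments I_lin {R E} mD finD {f0 f1 f2 f3 f4} k1 k2 k3 k4 K.
Arguments I_C {R E}.
Arguments part1_alg {R E} mD finD.
Arguments part2_alg {R E} mD finD.
Arguments WE_int {R E} mD finD {n q u}.
Arguments WE_prod {R E} mD {n q u v}.
Arguments projC_affine {R}.
Arguments projP_affine {R}.
Arguments dx_affine {R}.
Arguments dy_affine {R}.
Arguments dx_sub {R}.
Arguments dy_sub {R}.

Theorem lemma5p1 (R : realType) (E : set (R * R)) (n : nat) (q : nat -> R * R)
  (gamma : R) :
  is_polygon E n q -> 0 < gamma ->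
  (forall r c v, WR r -> WC n q c -> WE E n q v ->
     aE gamma E r v = 0 /\
     aE gamma E c (fun x => v x - proj_C E n q v x) = 0) /\
  (forall u v, WE E n q u -> WE E n q v ->
     aE gamma E u v =
     aE gamma E (proj_C E n q u) (proj_C E n q v) +
     aE gamma E (fun x => u x - proj_P E n q u x) (fun x => v x - proj_P E n q v x)).
Proof.
move=> [_ _ cE _ _] _.
have mD : measurable (interior E : set (T2 R)) by apply: open_meas2; exact: open_interior.
have finD := fin_compact cE.
split.
  move=> r c v [r0 ->] [[g [c0 ->]] _] hv; split.
    rewrite /aE (eq_Rintegral _ (g:=fun _ => 0)); first by rewrite (I_C mD) mul0r mulr0.
    move=> x _; rewrite /grad_dot.
    have -> : (fun _ : R * R => r0) = affine_fun (0, 0) r0.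
      by apply/funext => y; rewrite /affine_fun /= !mul0r !add0r.
    by rewrite dx_affine dy_affine /= !mul0r addr0.
  have [ia ib] := WE_int mD finD hv.
  rewrite /aE projC_affine.
  rewrite (eq_Rintegral (@leb2 R) (g := fun x => g.1 * (dx v x - mean E (dx v))
     + g.2 * (dy v x - mean E (dy v)))); last first.
    move=> x /set_mem Dx; case: hv => _ _ /(_ x Dx) [du _ _ _] _ _.
    by rewrite /grad_dot dx_affine dy_affine dx_sub // dy_sub.
  have h := part1_alg mD finD (dx v) (dy v) g.1 g.2 ia ib.
  apply/eqP; rewrite mulf_eq0; apply/orP; right; apply/eqP; exact: h.
move=> u v hu hv.
have [ia ib] := WE_int mD finD hu.
have [ic id] := WE_int mD finD hv.
have iuv := WE_prod mD hu hv.
rewrite /aE !projP_affine !projC_affine -mulrDr; congr (_ * _).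
rewrite (eq_Rintegral (@leb2 R) (g := fun _ => mean E (dx u) * mean E (dx v)
    + mean E (dy u) * mean E (dy v)) (f := grad_dot (affine_fun _ _) _)); last first.
  by move=> x _; rewrite /grad_dot !dx_affine !dy_affine.
rewrite (eq_Rintegral (@leb2 R) (g := fun x => (dx u x - mean E (dx u)) * (dx v x - mean E (dx v))
    + (dy u x - mean E (dy u)) * (dy v x - mean E (dy v)))
   (f := grad_dot (fun x => u x - _) _)); last first.
  move=> x /set_mem Dx.
  case: hu => _ _ /(_ x Dx) [du _ _ _] _ _; case: hv => _ _ /(_ x Dx) [dv _ _ _] _ _.
  by rewrite /grad_dot dx_sub // dy_sub // dx_sub // dy_sub.
exact (part2_alg mD finD _ _ _ _ ia ib ic id iuv).
Qed.
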